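(* Let $X$ be a complex Banach space, $\mathcal{F}$ a commutative algebra with unit, $\Phi:\mathcal{F}\to\mathcal{C}(X)$ a calculus, and $f\in\mathcal{F}$. If $\mathcal{E}\subseteq\mathrm{reg}(f,\Phi)$ is a $\Phi$-anchor set, then $\mathcal{E}$ determines $\Phi$ at $f$, i.e., for all $x,y\in X$: $\Phi(f)x=y$ if and only if $\Phi(ef)x=\Phi(e)y$ for all $e\in\mathcal{E}$.
   Context: $\mathcal{L}(X)$, $\mathcal{C}(X)$: bounded, resp. closed linear operators on $X$; operator inclusions are graph inclusions, sums/products have natural domains, and ''$Tx=y$'' means $x\in\mathrm{dom}(T)$ and $Tx=y$. A proto-calculus is a map $\Phi:\mathcal{F}\to\mathcal{C}(X)$ ($\mathcal{F}$ a unital algebra) with (FC1) $\Phi(\mathbf{1})=I$; (FC2) $\lambda\Phi(f)\subseteq\Phi(\lambda f)$, $\Phi(f)+\Phi(g)\subseteq\Phi(f+g)$; (FC3) $\Phi(f)\Phi(g)\subseteq\Phi(fg)$ with $\mathrm{dom}(\Phi(f)\Phi(g))=\mathrm{dom}(\Phi(g))\cap\mathrm{dom}(\Phi(fg))$. Let $\mathrm{bdd}(\mathcal{F},\Phi)=\{f:\Phi(f)\in\mathcal{L}(X)\}$ and for $f\in\mathcal{F}$, $\mathrm{reg}(f,\Phi)=\{e\in\mathcal{F}: e,\ ef\in\mathrm{bdd}(\mathcal{F},\Phi)\}$. A subset $\mathcal{M}\subseteq\mathrm{bdd}(\mathcal{F},\Phi)$ determines $\Phi$ at $f$ if for all $x,y\in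 X$: $\Phi(f)x=y\iff\Phi(ef)x=\Phi(e)y$ for all $e\in\mathcal{M}\cap\mathrm{reg}(f,\Phi)$. A proto-calculus is a calculus if (FC4) $\mathrm{bdd}(\mathcal{F},\Phi)$ determines $\Phi$ at every $f\in\mathcal{F}$. A nonempty subset $\mathcal{M}\subseteq\mathrm{bdd}(\mathcal{F},\Phi)$ is a $\Phi$-anchor set if $\bigcap_{e\in\mathcal{M}}\ker\Phi(e)=\{0\}$. *)

(* Defs.v *)
From HB Require Import structures.
From mathcomp Require Import all_boot all_order all_algebra.
From mathcomp Require Import complex.
From mathcomp Require Import all_classical all_reals all_analysis.
Set Implicit Arguments. Unset Strict Implicit. Unset Printing Implicit Defensive.
Import Order.TTheory GRing.Theory Num.Theory.
Import numFieldNormedType.Exports.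
Local Open Scope classical_set_scope.
Local Open Scope ring_scope.

(* Linear operators on X are represented by their graphs, subsets of X * X.
   "T x = y" means (x, y) \in T (which forces x \in dom T).  Operator
   inclusion is graph inclusion. *)
Section Ops.
Variables (K : numDomainType) (X : normedModType K).

Definition op := set (X * X).

Definition op_dom (T : op) : set X := [set x | exists y, T (x, y)].

Definition closed_op (T : op) : Prop :=
  [/\ T (0, 0),
      (forall x1 y1 x2 y2, T (x1, y1) -> T (x2, y2) -> T (x1 + x2, y1 + y2)),
      (forall (a : K) x y, T (x, y) -> T (a *: x, a *: y)),
      (forall x y1 y2, T (x, y1) -> T (x, y2) -> y1 = y2)
    & closed T].

Definition bounded_op (T : op) : Prop :=
  closed_op T /\ op_dom T = setT /\
  exists C : K, forall x y, T (x, y) -> `|y| <= C * `|x|.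

Definition op_id : op := [set p | p.2 = p.1].
Definition op_scale (a : K) (T : op) : op :=
  [set p | exists y, T (p.1, y) /\ p.2 = a *: y].
Definition op_add (S T : op) : op :=
  [set p | exists y1 y2, S (p.1, y1) /\ T (p.1, y2) /\ p.2 = y1 + y2].
Definition op_mul (S T : op) : op :=
  [set p | exists z, T (p.1, z) /\ S (z, p.2)].
End Ops.

Section Calculus.
Variables (K : numDomainType) (X : normedModType K) (F : comAlgType K).
Variable Phi : F -> op X.

Definition is_proto_calculus : Prop :=
  (forall f, closed_op (Phi f)) /\
  [/\ Phi 1 = @op_id _ X,
      (forall (a : K) f, op_scale a (Phi f) `<=` Phi (a *: f)),
      (forall f g, op_add (Phi f) (Phi g) `<=` Phi (f + g)),
      (forall f g, op_mul (Phi f) (Phi g) `<=` Phi (f * g))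
    & (forall f g, op_dom (op_mul (Phi f) (Phi g))
                   = op_dom (Phi g) `&` op_dom (Phi (f * g)))].

Definition bdd : set F := [set f | bounded_op (Phi f)].

Definition reg (f : F) : set F := [set e | bdd e /\ bdd (e * f)].

Definition determines (M : set F) (f : F) : Prop :=
  M `<=` bdd /\
  forall x y : X, Phi f (x, y) <->
    (forall e, M e -> reg f e ->
       exists z, Phi (e * f) (x, z) /\ Phi e (y, z)).

Definition is_calculus : Prop :=
  is_proto_calculus /\ forall f, determines bdd f.

Definition anchor_set (M : set F) : Prop :=
  M !=set0 /\ M `<=` bdd /\
  forall x : X, (forall e, M e -> Phi e (x, 0)) -> x = 0.
End Calculus.

(* Main.v *)
Require Import Defs.
From HB Require Import structures.
From mathcomp Require Import all_boot all_order all_algebra.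
From mathcomp Require Import complex.
From mathcomp Require Import all_classical all_reals all_analysis.
Import Order.TTheory GRing.Theory Num.Theory.
Import numFieldNormedType.Exports.
Local Open Scope classical_set_scope.
Local Open Scope ring_scope.

Lemma bdd_app (K : numDomainType) (X : normedModType K) (T : op X) (x : X) :
  bounded_op T -> exists y, T (x, y).
Proof.
move=> [_ [Hd _]].
have : op_dom T x by rewrite Hd.
by [].
Qed.

Theorem theorem4p1 (R : realType) (X : completeNormedModType (R[i]))
  (F : comAlgType (R[i])) (Phi : F -> op X) (f : F) (E : set F) :
  is_calculus Phi -> E `<=` reg Phi f -> anchor_set Phi E ->
  determines Phi E f.
Proof.
move=> [[Hcl [H1 Hsc Had Hmul Hdm]] H4] HE [_ [_ Hanch]].
have Hsv : forall h x y1 y2, Phi h (x, y1) -> Phi h (x, y2) -> y1 = y2.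
  by move=> h x y1 y2; case: (Hcl h) => _ _ _ Hs _; apply: Hs.
have Hcomp : forall h k x z w, Phi k (x, z) -> Phi h (z, w) -> Phi (h * k) (x, w).
  by move=> h k x z w Hk Hh; apply: Hmul; exists z.
split.
  by move=> e /HE [].
move=> x y; split.
  move=> Hf e _ [He Hef].
  have [z Hz] := @bdd_app _ _ _ y He.
  by exists z; split => //; apply: Hcomp Hf Hz.
move=> Hyp.
have [_ Hdet] := H4 f.
apply/Hdet => g Hg [_ Hgf].
have [u Hu] := @bdd_app _ _ _ x Hgf.
have [v Hv] := @bdd_app _ _ _ y Hg.
exists u; split => //.
suff -> : u = v by [].
apply/eqP; rewrite -subr_eq0; apply/eqP.
apply: Hanch => e Ee.
have [He Hef] := HE e Ee.
have [z [Hz1 Hz2]] := Hyp e Ee (HE e Ee).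
have [a Ha] := @bdd_app _ _ _ u He.
have [b Hb] := @bdd_app _ _ _ z Hg.
have [c Hc] := @bdd_app _ _ _ v He.
have Ea : Phi (e * (g * f)) (x, a) by apply: Hcomp Hu Ha.
have Eb : Phi (g * (e * f)) (x, b) by apply: Hcomp Hz1 Hb.
have Eab : a = b.
  apply: (Hsv _ x) Ea _.
  by rewrite mulrCA.
have Ec : Phi (e * g) (y, c) by apply: Hcomp Hv Hc.
have Eb' : Phi (g * e) (y, b) by apply: Hcomp Hz2 Hb.
have Ecb : c = b.
  apply: (Hsv _ y) Ec _.
  by rewrite mulrC.
subst a c.
case: (Hcl e) => _ Hadd Hscl _ _.
have Hn : Phi e ((-1) *: v, (-1) *: b) by apply: Hscl.
rewrite !scaleN1r in Hn.
have := Hadd _ _ _ _ Ha Hn.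
by rewrite subrr.
Qed.
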